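(* Let $A=\{a_s(n_s)\}_{s=1}^k$ and $B=\{b_t(m_t)\}_{t=1}^l$ be two finite systems of residue classes, where $n_s,m_t$ are positive integers and $a_s,b_t$ are integers with $0\leqslant a_s<n_s$ for $s=1,\ldots,k$ and $0\leqslant b_t<m_t$ for $t=1,\ldots,l$. Let $p$ be a prime with $p>|S(n_1,\ldots,n_k,m_1,\ldots,m_l)|$, and let $\zeta_p$ be a primitive $p$th root of unity. Then $A$ and $B$ are covering equivalent if and only if $$\sum_{s=1}^k\frac{\zeta_p^{a_s}}{1-\zeta_p^{n_s}}=\sum_{t=1}^l\frac{\zeta_p^{b_t}}{1-\zeta_p^{m_t}}.$$
   Context: For a positive integer $n$ and $a\in\{0,\ldots,n-1\}$, $a(n)$ denotes the residue class $\{x\in\mathbb Z: x\equiv a \pmod n\}$. For a finite system $A=\{a_s(n_s)\}_{s=1}^k$ of residue classes (repetitions allowed), its covering function is $w_A:\mathbb Z\to\{0,1,2,\ldots\}$, $w_A(x)=|\{1\leqslant s\leqslant k: x\equiv a_s \pmod{n_s}\}|$ (the covering function of the empty system is the zero function). Two finite systems $A,B$ are covering equivalent if $w_A(x)=w_B(x)$ for all $x\in\mathbb Z$. For positive integers $n_1,\ldots,n_k$, $S(n_1,\ldots,n_k)=\{r/n_s: r=0,\ldots,n_s-1;\ s=1,\ldots,k\}$, a set of rational numbers, and $|S(\cdot)|$ denotes its cardinality. *)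

(* Defs.v *)
From mathcomp Require Import all_boot all_order all_algebra all_field.
Set Implicit Arguments. Unset Strict Implicit. Unset Printing Implicit Defensive.
Import Order.TTheory GRing.Theory Num.Theory.

(* A finite system of residue classes {a_s(n_s)} is a list of pairs (a_s, n_s)
   (repetitions allowed). *)
Definition res_system := seq (nat * nat).

Definition wf_system (A : res_system) : Prop :=
  forall c, c \in A -> (0 < c.2)%N /\ (c.1 < c.2)%N.

Definition cover_fun (A : res_system) (x : int) : nat :=
  count (fun c : nat * nat => (x == (c.1 : int) %[mod (c.2 : int)])%Z) A.

Definition covering_equiv (A B : res_system) : Prop :=
  forall x : int, cover_fun A x = cover_fun B x.

Definition S_set (ns : seq nat) : seq rat :=
  undup (flatten [seq [seq (r%:R / n%:R : rat) | r <- iota 0 n] | n <- ns]).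

Definition card_S (ns : seq nat) : nat := size (S_set ns).

Local Open Scope ring_scope.
Definition zeta_sum (z : algC) (A : res_system) : algC :=
  \sum_(c <- A) z ^+ c.1 / (1 - z ^+ c.2).

(* Main.v *)
Require Import Defs.
From mathcomp Require Import all_boot all_order all_algebra all_field.
From mathcomp Require Import zify ring.
Set Implicit Arguments. Unset Strict Implicit. Unset Printing Implicit Defensive.
Import Order.TTheory GRing.Theory Num.Theory.
Local Open Scope ring_scope.

Definition Gp (L n : nat) : {poly algC} := \sum_(j < L %/ n) 'X^(j * n).
Definition Tp (L : nat) (A : res_system) : {poly algC} :=
  \sum_(c <- A) 'X^(c.1) * Gp L c.2.
Definition cnat (A : res_system) (x : nat) : nat :=
  count (fun c : nat * nat => x %% c.2 == c.1)%N A.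

Lemma geom_mul (n q : nat) :
  ('X^n - 1) * \sum_(j < q) 'X^(j * n) = 'X^(q * n) - 1 :> {poly algC}.
Proof.
elim: q => [|q IH]; first by rewrite big_ord0 mulr0 mul0n expr0 subrr.
rewrite big_ord_recr /= mulrDr IH mulrBl -exprD mul1r mulSn addnC.
by ring.
Qed.

Lemma Gp_mul (L n : nat) : (n %| L)%N ->
  ('X^n - 1) * Gp L n = 'X^L - 1.
Proof. by move=> nL; rewrite /Gp geom_mul divnK. Qed.

Lemma ind_eq (x a n j q : nat) : (0 < n)%N -> (a < n)%N -> (j < q)%N ->
  (x == a + j * n)%N = [&& (x < q * n)%N, (x %% n == a)%N & (j == x %/ n)%N].
Proof.
move=> n0 an jq; apply/eqP/and3P.
  move=> ->; split.
  - have : (j.+1 <= q)%N by []. nia.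
  - by rewrite addnC modnMDl modn_small.
  - by rewrite addnC divnMDl // divn_small // addn0.
case=> _ /eqP <- /eqP ->; by rewrite addnC -divn_eq.
Qed.

Lemma coef_term (L a n x : nat) : (0 < n)%N -> (a < n)%N -> (n %| L)%N ->
  ('X^a * Gp L n)`_x = ((x < L) && (x %% n == a))%N%:R.
Proof.
move=> n0 an nL; rewrite /Gp mulr_sumr coef_sum.
under eq_bigr do rewrite -exprD coefXn.
have HL : L = (L %/ n * n)%N by rewrite divnK.
case E: ((x < L) && (x %% n == a))%N.
  have xq : (x %/ n < L %/ n)%N.
    by case/andP: E => xL _; rewrite ltn_divRL //; exact: leq_ltn_trans (leq_divM x n) xL.
  rewrite (bigD1 (Ordinal xq)) //= big1 ?addr0.
    by rewrite (@ind_eq _ _ _ _ _ n0 an xq) divnK //; case/andP: E => -> ->; rewrite eqxx.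
  move=> i /eqP ne; rewrite (@ind_eq _ _ _ _ _ n0 an (ltn_ord i)) divnK //.
  case/andP: E => -> -> /=.
  case: eqP => // h; exfalso; apply: ne; apply: val_inj; exact: h.
rewrite big1 // => i _; rewrite (@ind_eq _ _ _ _ _ n0 an (ltn_ord i)) divnK // .
by move: E; case: (x < L)%N; case: (x %% n == a)%N.
Qed.
Local Open Scope ring_scope.

Lemma coef_Tp (L : nat) (A : res_system) (x : nat) : wf_system A ->
  (forall c, c \in A -> (c.2 %| L)%N) ->
  (Tp L A)`_x = (if (x < L)%N then cnat A x else 0%N)%:R.
Proof.
elim: A => [|c A IH] wfA dA; first by rewrite /Tp big_nil coef0; case: ifP.
have [c0 c1] := wfA c (mem_head _ _).
rewrite /Tp big_cons coefD coef_term //; last exact: dA (mem_head _ _).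
rewrite -/(Tp L A) IH; last by move=> d dA'; apply: dA; rewrite inE dA' orbT.
  rewrite /cnat /=; case: (x < L)%N => /=.
  by rewrite -natrD.
  by rewrite addr0.
by move=> d dA'; apply: wfA; rewrite inE dA' orbT.
Qed.

Lemma cover_nat (A : res_system) (x : nat) : wf_system A ->
  cover_fun A (Posz x) = cnat A x.
Proof.
move=> wfA; apply: eq_in_count => c /wfA [c0 c1] /=.
by rewrite !modz_nat eqz_nat (modn_small c1).
Qed.

Lemma cover_mod (A : res_system) (L : nat) (x : int) :
  (forall c, c \in A -> (c.2 %| L)%N) ->
  cover_fun A x = cover_fun A (x %% L)%Z.
Proof.
move=> dA; apply: eq_in_count => c /dA /dvdnP [q Lq] /=.
congr (_ == _).
rewrite {1}(divz_eq x L) Lq PoszM mulrA modzMDl //.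
Qed.

Lemma cov_iff (A B : res_system) (L : nat) : wf_system A -> wf_system B ->
  (0 < L)%N -> (forall c, c \in A ++ B -> (c.2 %| L)%N) ->
  covering_equiv A B <-> Tp L A = Tp L B.
Proof.
move=> wA wB L0 dAB.
have dA : forall c, c \in A -> (c.2 %| L)%N by move=> c h; apply: dAB; rewrite mem_cat h.
have dB : forall c, c \in B -> (c.2 %| L)%N by move=> c h; apply: dAB; rewrite mem_cat h orbT.
split.
  move=> eqv; apply/polyP => x; rewrite !coef_Tp //.
  by rewrite -!cover_nat // eqv.
move=> eqT x; rewrite (cover_mod x dA) (cover_mod x dB).
have Lnz : (L%:Z != 0) by rewrite eqz_nat -lt0n.
have [y Hy] : exists y : nat, (x %% L)%Z = y.
  exists `|(x %% L)%Z|%N; by rewrite gez0_abs // modz_ge0.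
have yL : (y < L)%N.
  by rewrite -ltz_nat -Hy ltz_pmod // ltz_nat.
rewrite Hy !cover_nat //; apply/eqP.
have := congr1 (fun P : {poly algC} => P`_y) eqT; rewrite /= !coef_Tp // yL.
by move/eqP; rewrite eqr_nat.
Qed.
Local Open Scope ring_scope.

Lemma Gp_eval (L n : nat) (y : algC) : (n %| L)%N -> y ^+ n != 1 ->
  (Gp L n).[y] = (y ^+ L - 1) / (y ^+ n - 1).
Proof.
move=> nL yn; have := congr1 (horner^~ y) (Gp_mul nL).
rewrite /= hornerM !hornerE => <-.
by rewrite [X in _ = X / _]mulrC mulfK // subr_eq0.
Qed.

Lemma Tp_eval (L : nat) (A : res_system) (y : algC) :
  (forall c, c \in A -> (c.2 %| L)%N) -> (forall c, c \in A -> y ^+ c.2 != 1) ->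
  (Tp L A).[y] = (1 - y ^+ L) * zeta_sum y A.
Proof.
move=> dA yA; rewrite /Tp horner_sum /zeta_sum mulr_sumr.
apply: eq_big_seq => c cA; rewrite hornerM hornerXn Gp_eval ?dA ?yA //.
have e1 : y ^+ L - 1 = - (1 - y ^+ L) by rewrite opprB.
have e2 : y ^+ c.2 - 1 = - (1 - y ^+ c.2) by rewrite opprB.
by rewrite e1 e2 invrN mulrNN mulrCA.
Qed.

Lemma aut_zs (u : {rmorphism algC -> algC}) (z : algC) (A : res_system) :
  u (zeta_sum z A) = zeta_sum (u z) A.
Proof.
rewrite /zeta_sum rmorph_sum; apply: eq_bigr => c _.
by rewrite fmorph_div rmorphB rmorph1 !rmorphXn.
Qed.

Definition Hs (M : {poly algC}) (A : res_system) : {poly algC} :=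
  \sum_(c <- A) 'X^(c.1) * (M %/ ('X^(c.2) - 1)).

Lemma Hs_eval (M : {poly algC}) (A : res_system) (y : algC) :
  (forall c, c \in A -> ('X^(c.2) - 1) %| M) -> (forall c, c \in A -> y ^+ c.2 != 1) ->
  (Hs M A).[y] = - M.[y] * zeta_sum y A.
Proof.
move=> dA yA; rewrite /Hs horner_sum /zeta_sum mulr_sumr.
apply: eq_big_seq => c cA; rewrite hornerM hornerXn.
have := congr1 (horner^~ y) (divpK (dA c cA)).
rewrite /= hornerM !hornerE => hM.
have ny : y ^+ c.2 - 1 != 0 by rewrite subr_eq0 yA.
have -> : (M %/ ('X^(c.2) - 1)).[y] = M.[y] / (y ^+ c.2 - 1).
  by rewrite -hM mulfK.
have e2 : y ^+ c.2 - 1 = - (1 - y ^+ c.2) by rewrite opprB.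
by rewrite e2 invrN /=; ring.
Qed.

Lemma Hs_size (M : {poly algC}) (A : res_system) : M != 0 -> wf_system A ->
  (forall c, c \in A -> ('X^(c.2) - 1) %| M) ->
  (size (Hs M A) <= (size M).-1)%N.
Proof.
move=> M0 wA dA; rewrite /Hs big_seq; apply: (big_ind (fun q : {poly algC} => size q <= (size M).-1)%N).
- by rewrite size_poly0.
- by move=> p q hp hq; apply: leq_trans (size_polyD _ _) _; rewrite geq_max hp hq.
move=> c cA; have [c0 c1] := wA c cA.
have hd := dA c cA.
have nz : ('X^(c.2) - 1 : {poly algC}) != 0.
  by rewrite -size_poly_eq0 -(@polyC1 algC) size_XnsubC.
have s1 := dvdp_leq M0 hd.
rewrite -(@polyC1 algC) size_XnsubC // in s1.
have s2 := size_divp M nz.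
rewrite -(@polyC1 algC) size_XnsubC //= in s2.
rewrite polyC1 in s2.
apply: leq_trans (size_polyMleq _ _) _.
have h : forall a n m : nat, (a < n)%N -> (n < m)%N -> (a + (m - n) <= m.-1)%N by move=> *; lia.
rewrite size_polyXn s2 /=; exact: h c1 s1.
Qed.
Local Open Scope ring_scope.

Lemma XnsubC_nz (n : nat) : (0 < n)%N -> ('X^n - 1 : {poly algC}) != 0.
Proof. by move=> n0; rewrite -size_poly_eq0 -(@polyC1 algC) size_XnsubC. Qed.

Lemma RH (L n : nat) (M : {poly algC}) : (0 < n)%N -> (n %| L)%N ->
  ('X^n - 1) %| M -> M %| 'X^L - 1 ->
  (('X^L - 1) %/ M) * (M %/ ('X^n - 1)) = Gp L n.
Proof.
move=> n0 nL d1 d2; apply: (mulfI (XnsubC_nz n0)).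
by rewrite Gp_mul // mulrCA [_ * (M %/ _)]mulrC (divpK d1) (divpK d2).
Qed.

Lemma Tp_R (L : nat) (A : res_system) (M : {poly algC}) : wf_system A ->
  (forall c, c \in A -> (c.2 %| L)%N) -> (forall c, c \in A -> ('X^(c.2) - 1) %| M) ->
  M %| 'X^L - 1 ->
  (('X^L - 1) %/ M) * Hs M A = Tp L A.
Proof.
move=> wA dA hA hM; rewrite /Hs /Tp mulr_sumr; apply: eq_big_seq => c cA.
have [c0 _] := wA c cA.
by rewrite mulrCA RH ?dA ?hA.
Qed.

Lemma main_back (A B : res_system) (L p : nat) (zeta : algC) (M : {poly algC}) :
  wf_system A -> wf_system B -> (forall c, c \in A ++ B -> (c.2 %| L)%N) ->
  prime p -> p.-primitive_root zeta ->
  (forall k, (0 < k < p)%N -> forall c, c \in A ++ B -> (zeta ^+ k) ^+ c.2 != 1) ->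
  M != 0 -> (size M <= p)%N -> (forall c, c \in A ++ B -> ('X^(c.2) - 1) %| M) ->
  M %| 'X^L - 1 ->
  zeta_sum zeta A = zeta_sum zeta B -> Tp L A = Tp L B.
Proof.
move=> wA wB dAB pp prim nz1 M0 sM hMAB hML eqz.
have dA : forall c, c \in A -> (c.2 %| L)%N by move=> c h; apply: dAB; rewrite mem_cat h.
have dB : forall c, c \in B -> (c.2 %| L)%N by move=> c h; apply: dAB; rewrite mem_cat h orbT.
have hA : forall c, c \in A -> ('X^(c.2) - 1) %| M by move=> c h; apply: hMAB; rewrite mem_cat h.
have hB : forall c, c \in B -> ('X^(c.2) - 1) %| M by move=> c h; apply: hMAB; rewrite mem_cat h orbT.
set Q := Hs M A - Hs M B.
have Qsz : (size Q <= p.-1)%N.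
  apply: leq_trans (size_polyD _ _) _; rewrite size_polyN geq_max.
  have sM' : ((size M).-1 <= p.-1)%N by rewrite -!subn1 leq_sub2r.
  by rewrite !(leq_trans (Hs_size _ _ _) sM').
have Qroot : forall k, (0 < k < p)%N -> root Q (zeta ^+ k).
  move=> k /andP [k0 kp].
  have cop : coprime k p.
    rewrite coprime_sym prime_coprime //; apply/negP => /(dvdn_leq k0); rewrite leqNgt kp.
    by [].
  have [u hu] := Qn_aut_exists cop.
  have uz : u zeta = zeta ^+ k by apply: hu; exact: prim_expr_order.
  have yA : forall c, c \in A -> (zeta ^+ k) ^+ c.2 != 1.
    by move=> c h; apply: nz1; [rewrite k0 kp | rewrite mem_cat h].
  have yB : forall c, c \in B -> (zeta ^+ k) ^+ c.2 != 1.
    by move=> c h; apply: nz1; [rewrite k0 kp | rewrite mem_cat h orbT].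
  rewrite /root /Q hornerD hornerN !Hs_eval // -uz -!aut_zs eqz.
  by rewrite subrr.
have Q0 : Q = 0.
  apply/eqP; apply: contraT => Qn0.
  have p0 : (0 < p)%N by exact: prime_gt0.
  have Hall : all (root Q) [seq zeta ^+ k | k <- iota 1 p.-1].
    apply/allP => y /mapP [k]; rewrite mem_iota => /andP [k0 kp] ->.
    apply: Qroot; rewrite k0 /=; move: kp; lia.
  have Hun : uniq [seq zeta ^+ k | k <- iota 1 p.-1].
    rewrite map_inj_in_uniq ?iota_uniq // => i j; rewrite !mem_iota => /andP [i0 ip] /andP [j0 jp].
    move/eqP; rewrite (eq_prim_root_expr prim) !modn_small //; try (by move/eqP); lia.
  have := max_poly_roots Qn0 Hall Hun.
  by rewrite size_map size_iota ltnNge Qsz.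
have := Tp_R wA dA hA hML; have := Tp_R wB dB hB hML.
move=> <- <-; apply/eqP; rewrite -subr_eq0 -mulrBr -/Q Q0 mulr0 //.
Qed.
Local Open Scope ring_scope.

Lemma in_S (ns : seq nat) (n i : nat) : n \in ns -> (i < n)%N ->
  (i%:R / n%:R : rat) \in S_set ns.
Proof.
move=> nns iN; rewrite /S_set mem_undup; apply/flatten_mapP; exists n => //.
by apply/mapP; exists i => //; rewrite mem_iota.
Qed.

Lemma n_le_card (ns : seq nat) (n : nat) : n \in ns -> (n <= card_S ns)%N.
Proof.
move=> nns; rewrite /card_S.
have -> : n = size [seq (i%:R / n%:R : rat) | i <- iota 0 n] by rewrite size_map size_iota.
apply: uniq_leq_size.
  case: (posnP n) => [-> //|n0].
  rewrite map_inj_in_uniq ?iota_uniq // => i j _ _ /= h.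
  have nz : (n%:R : rat) != 0 by rewrite pnatr_eq0 -lt0n.
  by apply/eqP; rewrite -(eqr_nat rat) -(divIf nz h).
by move=> q /mapP [i]; rewrite mem_iota => /andP [_ iN] ->; apply: in_S.
Qed.

Lemma M_exists (ns : seq nat) (L : nat) : (0 < L)%N ->
  (forall n, n \in ns -> (0 < n)%N /\ (n %| L)%N) ->
  exists M : {poly algC}, [/\ M != 0, (size M <= (card_S ns).+1)%N,
    (forall n, n \in ns -> ('X^n - 1) %| M) & M %| 'X^L - 1].
Proof.
move=> L0 hns; have [z primz] := C_prim_root_exists L0.
pose phi (q : rat) := z ^+ `|numq (q * L%:R)|%N.
pose E := undup [seq phi q | q <- S_set ns].
exists (\prod_(e <- E) ('X - e%:P)); split.
- exact/monic_neq0/monic_prod_XsubC.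
- rewrite size_prod_XsubC ltnS; apply: leq_trans (size_undup _) _.
  by rewrite size_map.
- move=> n nns; have [n0 nL] := hns n nns.
  have primw := dvdn_prim_root primz nL.
  rewrite -(@polyC1 algC) -(factor_Xn_sub_1 primw) -(big_map (fun i => z ^+ (L %/ n) ^+ i) xpredT (fun e => 'X - e%:P)).
  apply: uniq_roots_dvdp.
    apply/allP => y /mapP [i]; rewrite mem_index_iota => /andP [_ iN] ->.
    rewrite root_prod_XsubC mem_undup; apply/mapP; exists (i%:R / n%:R).
      exact: in_S.
    rewrite /phi -exprM.
    have -> : (i%:R / n%:R * L%:R : rat) = (i * (L %/ n))%N%:R.
      have nz : (n%:R : rat) != 0 by rewrite pnatr_eq0 -lt0n.
      by rewrite -{1}(divnK nL) natrM natrM; field.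
    by rewrite pmulrn numq_int absz_nat mulnC.
  rewrite uniq_rootsE map_inj_in_uniq ?iota_uniq // => i j.
  rewrite !mem_index_iota => /andP [_ iN] /andP [_ jN].
  by move/eqP; rewrite (eq_prim_root_expr primw) !modn_small // => /eqP.
- apply: uniq_roots_dvdp; last by rewrite uniq_rootsE undup_uniq.
  apply/allP => e; rewrite mem_undup => /mapP [q _ ->].
  by rewrite /root hornerD hornerN hornerC hornerXn /phi -exprM mulnC exprM (prim_expr_order primz) expr1n subrr.
Qed.
Local Close Scope ring_scope.
Unset Implicit Arguments.

Theorem theorem1p1 (A B : res_system) (p : nat) (zeta : algC) :
  wf_system A -> wf_system B ->
  prime p ->
  (card_S ([seq c.2 | c <- A] ++ [seq c.2 | c <- B]) < p)%N ->
  (p.-primitive_root zeta)%R ->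
  covering_equiv A B <-> zeta_sum zeta A = zeta_sum zeta B.
Proof.
move=> wA wB pp cardp prim.
set ns := [seq c.2 | c <- A] ++ [seq c.2 | c <- B] in cardp.
have nsE : forall c, c \in A ++ B -> c.2 \in ns.
  move=> c; rewrite !mem_cat => /orP [h|h]; apply/orP; [left|right]; exact: map_f.
have pos : forall n, n \in ns -> (0 < n)%N /\ (n < p)%N.
  move=> n nns; split; last exact: leq_ltn_trans (n_le_card nns) cardp.
  move: nns; rewrite mem_cat => /orP [] /mapP [c cA ->].
    by case: (wA c cA).
  by case: (wB c cA).
have npd : forall n, n \in ns -> ~~ (p %| n)%N.
  move=> n /pos [n0 np]; apply/negP => /(dvdn_leq n0); rewrite leqNgt np.
  by [].
pose L := (\prod_(n <- ns) n)%N.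
have L0 : (0 < L)%N.
  rewrite /L big_seq; apply: (big_ind (fun m => 0 < m)%N) => //.
    by move=> x y x0 y0; rewrite muln_gt0 x0 y0.
  by move=> n /pos [].
have dL : forall n, n \in ns -> (n %| L)%N.
  by move=> n nns; rewrite /L (big_rem n) //= dvdn_mulr.
have copL : coprime p L.
  rewrite /L big_seq; apply: (big_ind (coprime p)).
  - exact: coprimen1.
  - by move=> x y hx hy; rewrite coprimeMr hx hy.
  by move=> n nns; rewrite prime_coprime // npd.
have nz1 : forall k, (0 < k < p)%N -> forall c, c \in A ++ B -> ((zeta ^+ k) ^+ c.2 != 1)%R.
  move=> k /andP [k0 kp] c cAB.
  have cop : coprime k p.
    rewrite coprime_sym prime_coprime //; apply/negP => /(dvdn_leq k0); rewrite leqNgt kp.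
    by [].
  have prim' : (p.-primitive_root (zeta ^+ k))%R by rewrite prim_root_exp_coprime.
  by rewrite -(prim_order_dvd prim') npd // nsE.
have dAB : forall c, c \in A ++ B -> (c.2 %| L)%N by move=> c h; apply: dL; exact: nsE.
rewrite (cov_iff wA wB L0 dAB); split.
  move=> eqT; have := congr1 (horner^~ zeta) eqT.
  have nzA : forall c, c \in A -> (zeta ^+ c.2 != 1)%R.
    move=> c h; have := nz1 1%N _ c; rewrite expr1; apply.
      by rewrite /= prime_gt1.
    by rewrite mem_cat h.
  have nzB : forall c, c \in B -> (zeta ^+ c.2 != 1)%R.
    move=> c h; have := nz1 1%N _ c; rewrite expr1; apply.
      by rewrite /= prime_gt1.
    by rewrite mem_cat h orbT.
  rewrite /= !Tp_eval //; last 2 first.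
  - by move=> c h; apply: dAB; rewrite mem_cat h orbT.
  - by move=> c h; apply: dAB; rewrite mem_cat h.
  apply: GRing.mulfI; rewrite subr_eq0 eq_sym -(prim_order_dvd prim).
  by rewrite -prime_coprime.
move=> eqz.
have hns : forall n, n \in ns -> (0 < n)%N /\ (n %| L)%N.
  by move=> n h; split; [case: (pos n h) | exact: dL].
have [M [M0 sM hM hML]] := M_exists L0 hns.
apply: (main_back wA wB dAB pp prim nz1 M0 _ _ hML eqz).
  exact: leq_trans sM cardp.
by move=> c h; apply: hM; exact: nsE.
Qed.
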